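(* Let $p\in[1,\infty]$ with Hölder conjugate $q$, let $R_0\in\mathbb{R}^{\mathcal{S}\times\mathcal{A}}$, $\alpha>0$, and $\mathcal{R}_p=\{R:\|R-R_0\|_p\le\alpha\}$. Then for every stationary policy $\pi\in\Pi$, the robust return satisfies $$\rho^\pi_{\mathcal{R}_p}:=\min_{R\in\mathcal{R}_p}\rho^\pi_R=\rho^\pi_{R_0}-\alpha\|d^\pi\|_q.$$
   Context: Finite MDP with finite state space $\mathcal{S}$, finite action space $\mathcal{A}$, transition kernel $P$, discount $\gamma\in[0,1)$, initial distribution $\mu$ with $\mu(s)>0$ for all $s$. $\Pi$ is the set of stationary randomized policies, $\pi_s(a)=\pi(a|s)$, $P^\pi(s'|s)=\sum_a\pi_s(a)P(s'|s,a)$. Occupancy measures: $d^\pi=\mu^\top(I-\gamma P^\pi)^{-1}\in\mathbb{R}^{\mathcal{S}}$, $d^\pi(s,a)=d^\pi(s)\pi_s(a)$; norms $\|\cdot\|_p,\|\cdot\|_q$ are taken over $\mathcal{S}\times\mathcal{A}$. Return: $\rho^\pi_R=\sum_{s,a}d^\pi(s,a)R(s,a)$. *)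

(* Defs.v *)
From HB Require Import structures.
From mathcomp Require Import all_boot all_order all_algebra.
From mathcomp Require Import all_classical all_reals ereal exp.
Set Implicit Arguments. Unset Strict Implicit. Unset Printing Implicit Defensive.
Import Order.TTheory GRing.Theory Num.Theory.
Local Open Scope ring_scope.

Section Defs.
Variable R : realType.

Definition lpnorm (T : finType) (p : \bar R) (f : T -> R) : R :=
  match p with
  | r%:E => (\sum_(x : T) `|f x| `^ r) `^ r^-1
  | +oo%E => \big[Num.max/0]_(x : T) `|f x|
  | -oo%E => 0
  end.

(* Hölder conjugate q of p: 1/p + 1/q = 1 (1 <-> +oo). *)
Definition hconj (p : \bar R) : \bar R :=
  match p with
  | r%:E => if r == 1 then +oo%E else (r / (r - 1))%:E
  | +oo%E => 1%:E
  | -oo%E => -oo%E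
  end.

Variables (nS nA : nat).

Definition Ppi (P : 'I_nS -> 'I_nA -> 'I_nS -> R) (pi : 'I_nS -> 'I_nA -> R)
  : 'M[R]_nS := \matrix_(s, s') \sum_(a < nA) pi s a * P s a s'.

Definition dstate (P : 'I_nS -> 'I_nA -> 'I_nS -> R) (gamma : R)
  (mu : 'rV[R]_nS) (pi : 'I_nS -> 'I_nA -> R) : 'rV[R]_nS :=
  mu *m invmx (1%:M - gamma *: Ppi P pi).

Definition dsa P gamma mu pi (x : 'I_nS * 'I_nA) : R :=
  dstate P gamma mu pi 0 x.1 * pi x.1 x.2.

Definition ret P gamma mu pi (Rw : 'I_nS * 'I_nA -> R) : R :=
  \sum_(x : 'I_nS * 'I_nA) dsa P gamma mu pi x * Rw x.

End Defs.

(* Main.v *)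
Require Import Defs.
From HB Require Import structures.
From mathcomp Require Import all_boot all_order all_algebra.
From mathcomp Require Import all_classical all_reals ereal exp.
Import Order.TTheory GRing.Theory Num.Theory.
Local Open Scope ring_scope.
From mathcomp Require Import ring lra.
Set Implicit Arguments. Unset Strict Implicit.

Section H.
Variables (R : realType) (T : finType).
Implicit Types (f g d e : T -> R).

Definition N (t : R) f := (\sum_x `|f x| `^ t) `^ t^-1.

Lemma N_ge0 t f : 0 <= N t f.
Proof. exact: powR_ge0. Qed.

Lemma N_eq0 t f : N t f = 0 -> forall x, f x = 0.
Proof.
move=> /powR_eq0_eq0 /eqP; rewrite psumr_eq0; last by move=> *; exact: powR_ge0.
move=> /allP H x; have /eqP := H x (mem_index_enum x).
by move/powR_eq0_eq0/normr0_eq0.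
Qed.

Lemma N_pow t f : t != 0 -> N t f `^ t = \sum_x `|f x| `^ t.
Proof.
by move=> t0; rewrite /N -powRrM mulVf // powRr1 // sumr_ge0 // => *; exact: powR_ge0.
Qed.

Lemma N_norm1 t f : t != 0 -> 0 < N t f -> \sum_x (`|f x| / N t f) `^ t = 1.
Proof.
move=> t0 Np.
have -> : \sum_x (`|f x| / N t f) `^ t = (\sum_x `|f x| `^ t) / N t f `^ t.
  rewrite mulr_suml; apply: eq_bigr => x _.
  rewrite powRM // ?invr_ge0 ?N_ge0 //; congr (_ * _).
  by rewrite -powR_inv1 ?N_ge0 // powRAC powR_inv1 // powR_ge0.
by rewrite N_pow // divff // -N_pow // gt_eqF // powR_gt0.
Qed.

Lemma N0 t f : t != 0 -> (forall x, f x = 0) -> N t f = 0.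
Proof.
move=> t0 H; rewrite /N big1 ?powR0 ?invr_neq0 // => x _.
by rewrite H normr0 powR0.
Qed.

Lemma resc (a b B A : R) : B != 0 -> A != 0 -> a * b = B * A * ((a / B) * (b / A)).
Proof. by move=> *; field; apply/andP. Qed.

Lemma fin_step (F G : T -> R) (s r : R) : \sum_x F x = 1 -> \sum_x G x = 1 -> r^-1 + s^-1 = 1 ->
  \sum_x (F x / s + G x / r) <= 1.
Proof. by move=> h1 h2 h; rewrite big_split /= -!mulr_suml h1 h2 !mul1r addrC h. Qed.

Lemma holder_fin r s d e : 0 < r -> 0 < s -> r^-1 + s^-1 = 1 ->
  \sum_x `|d x| * `|e x| <= N s d * N r e.
Proof.
move=> r0 s0 rs.
have [B0|Bp] := eqVneq (N s d) 0.
  rewrite B0 mul0r big1 // => x _; by rewrite (N_eq0 B0) normr0 mul0r.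
have [A0|Ap] := eqVneq (N r e) 0.
  rewrite A0 mulr0 big1 // => x _; by rewrite (N_eq0 A0) normr0 mulr0.
have {Bp}Bp : 0 < N s d by rewrite lt0r Bp N_ge0.
have {Ap}Ap : 0 < N r e by rewrite lt0r Ap N_ge0.
have -> : \sum_x `|d x| * `|e x| =
   N s d * N r e * \sum_x ((`|d x| / N s d) * (`|e x| / N r e)).
  rewrite mulr_sumr; apply: eq_bigr => x _.
  exact: (resc `|d x| `|e x| (lt0r_neq0 Bp) (lt0r_neq0 Ap)).
rewrite -[leRHS]mulr1 ler_wpM2l ?mulr_ge0 ?N_ge0 //.
apply: (le_trans (y := \sum_x ((`|d x| / N s d) `^ s / s + (`|e x| / N r e) `^ r / r))).
  apply: ler_sum => x _; apply: conjugate_powR => //;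
    try by rewrite divr_ge0 ?N_ge0.
  by rewrite addrC.
have h1 := N_norm1 (lt0r_neq0 s0) Bp.
have h2 := N_norm1 (lt0r_neq0 r0) Ap.
exact: (fin_step (F := fun x => (`|d x| / N s d) `^ s) (G := fun x => (`|e x| / N r e) `^ r) h1 h2 rs).
Qed.
Lemma sum_split (F G : T -> R) : \sum_x (F x + G x) = \sum_x F x + \sum_x G x.
Proof. exact: big_split. Qed.

Lemma sumD1 (F : T -> R) j : \sum_x F x = F j + \sum_(x | x != j) F x.
Proof. exact: bigD1. Qed.

Lemma alg1 (a y g w : R) : y * (a * g * w) = a * ((y * g) * w).
Proof. by ring. Qed.
Lemma alg2 (a y w B : R) : B != 0 -> a * (y * w) = a * B * ((y / B) * w).
Proof. by move=> h; field. Qed.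

Definition sg' (y : R) : R := if 0 <= y then 1 else -1.
Lemma sgM y : y * sg' y = `|y|.
Proof.
rewrite /sg'; case: ifP => h; first by rewrite mulr1 ger0_norm.
by rewrite mulrN1 ltr0_norm // ltNge h.
Qed.
Lemma normsg y : `|sg' y| = 1.
Proof. by rewrite /sg'; case: ifP; rewrite ?normrN normr1. Qed.

Lemma lpnorm_ext p f g : f =1 g -> lpnorm p f = lpnorm p g.
Proof.
move=> fg; case: p => [r| |]; cbn [lpnorm].
- by congr (_ `^ _); apply: eq_bigr => x _; rewrite fg.
- by apply: eq_bigr => x _; rewrite fg.
- by [].
Qed.

Lemma lpnorm_ge0 p f : 0 <= lpnorm p f.
Proof. case: p => [r| |]; cbn [lpnorm]; [exact: powR_ge0 | exact: bigmax_ge_id | exact: lexx]. Qed.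

Lemma lpnorm1 f : lpnorm 1%:E f = \sum_x `|f x|.
Proof.
cbn [lpnorm]; rewrite invr1 powRr1; last by apply: sumr_ge0 => *; exact: powR_ge0.
by apply: eq_bigr => x _; rewrite powRr1.
Qed.

Lemma le_max_norm f x : `|f x| <= lpnorm +oo%E f.
Proof. exact: le_bigmax. Qed.

Lemma hconj1 : hconj (1%:E : \bar R) = +oo%E.
Proof. by cbn [hconj]; rewrite eqxx. Qed.
Lemma hconjy : hconj (+oo%E : \bar R) = 1%:E.
Proof. by []. Qed.
Lemma hconj_fin (r : R) : r != 1 -> hconj r%:E = (r / (r - 1))%:E.
Proof. by move=> h; cbn [hconj]; rewrite (negbTE h). Qed.
Lemma lpnorm_fin (r : R) f : lpnorm r%:E f = N r f.
Proof. by []. Qed.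

Lemma conj_fin (r : R) : 1 < r -> (r / (r - 1))^-1 + r^-1 = 1.
Proof. move=> r1.
have h1 : r != 0 by rewrite gt_eqF // (lt_trans ltr01).
have h2 : r - 1 != 0 by rewrite subr_eq0 gt_eqF.
by field; rewrite h1 h2.
Qed.

Lemma holder_gen p d e : (1%:E <= p)%E ->
  `|\sum_x d x * e x| <= lpnorm (hconj p) d * lpnorm p e.
Proof.
move=> p1; apply: (le_trans (ler_norm_sum _ _ _)).
under eq_bigr do rewrite normrM.
case: p p1 => [r| |] //; rewrite ?lee_fin => r1.
- have [r1E|rn1] := eqVneq r 1.
    rewrite r1E hconj1 lpnorm1 mulr_sumr; apply: ler_sum => x _.
    by rewrite ler_wpM2r // le_max_norm.
  have r1' : 1 < r by rewrite lt_neqAle r1 andbT eq_sym.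
  have r0 : 0 < r by apply: lt_trans r1'.
  rewrite (hconj_fin rn1) !lpnorm_fin.
  apply: (holder_fin (s := r / (r - 1)) (r := r)) => //.
    by rewrite divr_gt0 // subr_gt0.
  by rewrite addrC conj_fin.
- rewrite hconjy lpnorm1 mulr_suml; apply: ler_sum => x _.
  by rewrite ler_wpM2l // le_max_norm.
Qed.

Lemma witness_gen p d alpha : (1%:E <= p)%E -> 0 < alpha ->
  exists e, lpnorm p e <= alpha /\ \sum_x d x * e x = - (alpha * lpnorm (hconj p) d).
Proof.
move=> p1 a0.
case: p p1 => [r| |] //; rewrite ?lee_fin => r1.
- have [r1E|rn1] := eqVneq r 1.
    rewrite r1E hconj1.
    have : lpnorm +oo%E d = 0 \/ exists j, lpnorm +oo%E d = `|d j|.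
      cbn [lpnorm]; apply: (big_ind (fun m => m = 0 \/ exists j, m = `|d j|)).
      + by left.
      + move=> x y hx hy; case: (leP x y) => _; by [].
      + by move=> i _; right; exists i.
    case=> [M0|[j Mj]].
      exists (fun _ => 0); rewrite lpnorm1 M0 mulr0 oppr0 big1 ?ltW // => [|x _].
        by rewrite big1 // => x _; rewrite mulr0.
      by rewrite normr0.
    exists (fun x => if x == j then - (alpha * sg' (d j)) else 0).
    rewrite lpnorm1 Mj (sumD1 _ j) eqxx big1 ?addr0; last first.
      by move=> x /negbTE ->; rewrite normr0.
    rewrite (sumD1 _ j) eqxx big1 ?addr0; last first.
      by move=> x /negbTE ->; rewrite mulr0.
    split; first by rewrite normrN normrM normsg mulr1 ger0_norm ?(ltW a0).
    by rewrite mulrN mulrCA sgM.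
  have r1' : 1 < r by rewrite lt_neqAle r1 andbT eq_sym.
  have r0 : 0 < r by apply: lt_trans r1'.
  rewrite (hconj_fin rn1).
  set s := r / (r - 1).
  have s0 : 0 < s by rewrite divr_gt0 // subr_gt0.
  have sr : (s - 1) * r = s.
    have h2 : r - 1 != 0 by rewrite subr_eq0 gt_eqF.
    by rewrite /s; field.
  rewrite !lpnorm_fin.
  have [B0|Bp] := eqVneq (N s d) 0.
    exists (fun _ => 0); rewrite B0 mulr0 oppr0; split.
      by rewrite lpnorm_fin (N0 (t:=r) (f:=fun _ => 0)) ?(lt0r_neq0 r0) ?(ltW a0).
    by rewrite big1 // => x _; rewrite mulr0.
  have {Bp}Bp : 0 < N s d by rewrite lt0r Bp N_ge0.
  set B := N s d in Bp *.
  exists (fun x => - (alpha * sg' (d x) * (`|d x| / B) `^ (s - 1))).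
  have h1 := N_norm1 (lt0r_neq0 s0) Bp.
  have ux x : 0 <= `|d x| / B by exact: divr_ge0 (normr_ge0 _) (ltW Bp).
  split.
    rewrite lpnorm_fin.
    have -> : N r (fun x => - (alpha * sg' (d x) * (`|d x| / B) `^ (s - 1)))
       = (alpha `^ r * \sum_x (`|d x| / B) `^ s) `^ r^-1.
      rewrite /N mulr_sumr; congr (_ `^ _); apply: eq_bigr => x _.
      rewrite normrN !normrM normsg mulr1 (ger0_norm (ltW a0)).
      rewrite (ger0_norm (powR_ge0 _ _)) (powRM _ (ltW a0) (powR_ge0 _ _)).
      by rewrite -powRrM sr.
    rewrite h1 mulr1 -powRrM (mulfV (lt0r_neq0 r0)) (powRr1 (ltW a0)).
    exact: lexx.
  have -> : - (alpha * B) = \sum_x - (alpha * B * (`|d x| / B) `^ s).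
    by rewrite sumrN -mulr_sumr h1 mulr1.
  apply: eq_bigr => x _.
  rewrite mulrN alg1 sgM (alg2 _ _ _ (lt0r_neq0 Bp)).
  by rewrite (mulr_powRB1 (ux x) s0).
- rewrite hconjy; exists (fun x => - (alpha * sg' (d x))); split.
    cbn [lpnorm]; apply: bigmax_le; first exact: ltW.
    by move=> x _; rewrite normrN normrM normsg mulr1 ger0_norm ?(ltW a0).
  rewrite lpnorm1 mulr_sumr -sumrN; apply: eq_bigr => x _.
  by rewrite mulrN mulrCA sgM.
Qed.
End H.
Theorem corollary1 (R : realType) (nS nA : nat)
  (P : 'I_nS -> 'I_nA -> 'I_nS -> R) (gamma : R) (mu : 'rV[R]_nS)
  (pi : 'I_nS -> 'I_nA -> R)
  (p : \bar R) (R0 : 'I_nS * 'I_nA -> R) (alpha : R) :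
  (forall s a s', 0 <= P s a s') ->
  (forall s a, \sum_(s' < nS) P s a s' = 1) ->
  0 <= gamma -> gamma < 1 ->
  (forall s, 0 < mu 0 s) -> \sum_(s < nS) mu 0 s = 1 ->
  (forall s a, 0 <= pi s a) -> (forall s, \sum_(a < nA) pi s a = 1) ->
  (1%:E <= p)%E -> 0 < alpha ->
  let q := hconj p in
  let inRp := fun Rw : 'I_nS * 'I_nA -> R =>
    lpnorm p (fun x => Rw x - R0 x) <= alpha in
  let v := ret P gamma mu pi R0 - alpha * lpnorm q (dsa P gamma mu pi) in
  (exists2 Rw, inRp Rw & ret P gamma mu pi Rw = v) /\
  (forall Rw, inRp Rw -> v <= ret P gamma mu pi Rw).
Proof.
move=> _ _ _ _ _ _ _ _ p1 a0 q inRp v.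
set D := dsa P gamma mu pi.
have retE Rw : ret P gamma mu pi Rw =
    ret P gamma mu pi R0 + \sum_x D x * (Rw x - R0 x).
  rewrite /ret -sum_split; apply: eq_bigr => x _.
  by rewrite -/D mulrBr addrC subrK.
split.
  have [e [he se]] := witness_gen D p1 a0.
  exists (fun x => R0 x + e x).
    rewrite /inRp (lpnorm_ext _ (g := e)) // => x.
    by rewrite addrC addKr.
  rewrite retE (eq_bigr (fun x => D x * e x)) ?se //.
  by move=> x _; rewrite addrC addKr.
move=> Rw hR; rewrite retE /v -/D lerD2l.
have := holder_gen D (fun x => Rw x - R0 x) p1.
rewrite ler_norml => /andP[h _].
apply: le_trans h; rewrite lerN2 [alpha * _]mulrC.
apply: ler_wpM2l; [exact: lpnorm_ge0 | exact: hR].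
Qed.
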